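(* Let $K$ be an arbitrary field and let $\tau=(q_{11},q_{12},q_{21},q_{22})$ and $\sigma=(p_{11},p_{12},p_{21},p_{22})$ be diagonal braidings on $K\langle x_1,x_2\rangle$. Then the braided algebras $A_\tau$ and $A_\sigma$ are isomorphic if and only if $\sigma=\tau$ or $\sigma=\tau^*$, where $\tau^*=(q_{22},q_{21},q_{12},q_{11})$.
   Context: $A=K\langle x_1,x_2\rangle$ is the free associative algebra with unit on $x_1,x_2$, with basis the set $X^*$ of words. For $q_{ij}\in K$, the diagonal braiding $\tau=(q_{11},q_{12},q_{21},q_{22})$ on $A$ is the linear map $A\otimes A\to A\otimes A$ given on words $u,v$ by $(u\otimes v)\tau=q_{11}^{s_1t_1}q_{12}^{s_1t_2}q_{21}^{s_2t_1}q_{22}^{s_2t_2}\,(v\otimes u)$, where $s_i$ (resp. $t_i$) is the number of occurrences of $x_i$ in $u$ (resp. $v$) (convention $0^0=1$); this is the unique extension to $A$, making $A$ a braided algebra, of the braiding $x_i\otimes x_j\mapsto q_{ij}x_j\otimes x_i$ of $V=Kx_1+Kx_2$. $A_\tau$ denotes $A$ equipped with $\tau$. An isomorphism of braided algebras $A_\tau\to A_\sigma$ is an algebra isomorphism $\varphi:A\to A$ such that $\tau(\varphi\otimes\varphi)=(\varphi\otimes\varphi)\sigma$, i.e. $(\varphi\otimes\varphi)((u\otimes v)\tau)=((\varphi\otimes\varphi)(u\otimes v))\sigma$ for all $u,v\in A$. *)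

(* Defs.v *)
From HB Require Import structures.
From mathcomp Require Import all_boot all_order all_algebra.
From mathcomp Require Import zify.
Set Implicit Arguments. Unset Strict Implicit. Unset Printing Implicit Defensive.
Import Order.TTheory GRing.Theory.
Local Open Scope ring_scope.

(** Words over the alphabet {x_1, x_2}; letter x_{i+1} is encoded by i : 'I_2. *)
Definition word := seq 'I_2.

(** The free algebra A = K<x_1,x_2>: finitely supported coefficient functions
    on the word basis X^* (finite support = vanishing on all long words). *)
Definition fin_supp (K : fieldType) (f : word -> K) : Prop :=
  exists n : nat, forall w : word, (n <= size w)%N -> f w = 0.

Record falg (K : fieldType) := FAlg { coef : word -> K; coef_fin : fin_supp coef }.
Arguments FAlg {K}.

Section Ops.
Variable K : fieldType.

Lemma delta_fin (u : word) : fin_supp (fun w : word => ((w == u)%:R : K)).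
Proof.
exists (size u).+1 => w hw; case: eqP => // E; move: hw; rewrite E; lia.
Qed.
Definition fdelta (u : word) : falg K := FAlg _ (delta_fin u).

Lemma add_fin (a b : falg K) : fin_supp (fun w => coef a w + coef b w).
Proof.
case: a => f [n hf]; case: b => g [m hg]; exists (maxn n m) => w hw /=.
rewrite hf ?hg ?addr0 //; lia.
Qed.
Definition fadd (a b : falg K) : falg K := FAlg _ (add_fin a b).

Lemma scale_fin (k : K) (a : falg K) : fin_supp (fun w => k * coef a w).
Proof. case: a => f [n hf]; exists n => w hw /=; by rewrite hf ?mulr0. Qed.
Definition fscale (k : K) (a : falg K) : falg K := FAlg _ (scale_fin k a).

Definition conv (f g : word -> K) (w : word) : K :=
  \sum_(i < (size w).+1) f (take i w) * g (drop i w).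

Lemma mul_fin (a b : falg K) : fin_supp (conv (coef a) (coef b)).
Proof.
case: a => f [n hf]; case: b => g [m hg]; exists (n + m)%N => w hw /=.
rewrite /conv big1 // => i _.
have hi := ltn_ord i.
case: (leqP n i) => hni.
  by rewrite hf ?mul0r // size_take; case: ltnP => _; lia.
by rewrite hg ?mulr0 // size_drop; lia.
Qed.
Definition fmul (a b : falg K) : falg K := FAlg _ (mul_fin a b).

Definition fone : falg K := fdelta [::].

Definition alg_iso (phi : falg K -> falg K) : Prop :=
  [/\ bijective phi,
      forall a b, phi (fadd a b) = fadd (phi a) (phi b),
      forall k a, phi (fscale k a) = fscale k (phi a),
      forall a b, phi (fmul a b) = fmul (phi a) (phi b) &
      phi fone = fone].

(** Diagonal braidings: q i j = q_{(i+1)(j+1)}. The braiding coefficient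
    (u ⊗ v)τ = bcoef q u v (v ⊗ u), with 0^0 = 1 (x ^+ 0 = 1). *)
Definition bcoef (q : 'M[K]_2) (u v : word) : K :=
  \prod_(i < 2) \prod_(j < 2) q i j ^+ (count_mem i u * count_mem j v).

(** Elements of A ⊗ A are identified with their coefficient functions on the
    basis {a ⊗ b | a, b ∈ X^*}. *)
Definition tensor := word -> word -> K.
Definition tpure (f g : word -> K) : tensor := fun a b => f a * g b.
(** the linear extension of the braiding to A ⊗ A, on coefficients:
    sum_{a,b} T(a,b) (a⊗b) ↦ sum_{a,b} T(a,b) c(a,b) (b⊗a) *)
Definition tbraid (q : 'M[K]_2) (T : tensor) : tensor :=
  fun x y => bcoef q y x * T y x.

(** φ : A_τ -> A_σ is an isomorphism of braided algebras:
    (φ⊗φ)((u⊗v)τ) = ((φ⊗φ)(u⊗v))σ; by linearity it suffices (and is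
    equivalent) to require it on the basis tensors u⊗v, u,v words, where
    (φ⊗φ)((u⊗v)τ) = c_τ(u,v) φ(v)⊗φ(u). *)
Definition braided_iso (q p : 'M[K]_2) (phi : falg K -> falg K) : Prop :=
  alg_iso phi /\
  forall (u v : word) (x y : word),
    bcoef q u v * tpure (coef (phi (fdelta v))) (coef (phi (fdelta u))) x y
    = tbraid p (tpure (coef (phi (fdelta u))) (coef (phi (fdelta v)))) x y.

Definition bstar (q : 'M[K]_2) : 'M[K]_2 :=
  \matrix_(i < 2, j < 2) q (rev_ord i) (rev_ord j).

End Ops.

(* Main.v *)
Require Import Defs.
From mathcomp Require Import all_boot all_order all_algebra.
From mathcomp Require Import zify ring.
From Stdlib Require Import FunctionalExtensionality ProofIrrelevance.
Set Implicit Arguments. Unset Strict Implicit. Unset Printing Implicit Defensive.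
Import Order.TTheory GRing.Theory.
Local Open Scope ring_scope.

Lemma falg_ext (K : fieldType) (a b : falg K) :
  (forall w, coef a w = coef b w) -> a = b.
Proof.
case: a => fa pa; case: b => fb pb /= H.
have E : fa = fb by apply: functional_extensionality.
subst; f_equal; apply: proof_irrelevance.
Qed.

Lemma ord2P (i : 'I_2) : i = ord0 \/ i = ord_max.
Proof. case: i => [[|[|n]] H]; [left|right|]; try by apply: val_inj. by []. Qed.

Lemma bcoef1 (K : fieldType) (q : 'M[K]_2) i j : bcoef q [:: i] [:: j] = q i j.
Proof.
rewrite /bcoef (bigD1 i) //= [X in _ * X]big1 ?mulr1.
  rewrite (bigD1 j) //= [X in _ * X]big1 ?mulr1.
    by rewrite !eqxx /= expr1.
  move=> b /= nb; rewrite eqxx [j == b]eq_sym (negbTE nb) /= muln0 expr0 //.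
move=> a /= na; apply: big1 => b _ /=; rewrite [i == a]eq_sym (negbTE na) /= expr0 //.
Qed.

Lemma conv_delta (K : fieldType) (u v x : word) :
  conv (coef (fdelta K u)) (coef (fdelta K v)) x = ((x == u ++ v)%:R : K).
Proof.
rewrite /conv /=.
case: (eqVneq x (u ++ v)) => [Ex|nx].
  have hu : (size u < (size x).+1)%N by rewrite Ex size_cat; lia.
  rewrite (bigD1 (Ordinal hu)) //= big1 ?addr0.
    by rewrite Ex take_size_cat // drop_size_cat // !eqxx mulr1.
  move=> k nk; case: eqP => [Et|]; last by rewrite mul0r.
  exfalso; move/eqP: nk; apply; apply: val_inj => /=.
  have hs : size (take k x) = size u by rewrite Et.
  rewrite size_take in hs.
  have hk := ltn_ord k.
  move: hs; case: (ltnP k (size x)) => h1 hs; first exact: hs.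
  change (size x = size u) in hs; lia.
rewrite big1 //= => k _; case: eqP => Et; case: eqP => Ed; rewrite ?mulr0 ?mul0r //.
by move/eqP: nx; case; rewrite -Et -Ed cat_take_drop.
Qed.

Lemma fdelta_cat (K : fieldType) u v : fdelta K (u ++ v) = fmul (fdelta K u) (fdelta K v).
Proof. by apply: falg_ext => w /=; rewrite conv_delta. Qed.

Section Map.
Variable K : fieldType.
Variable f : 'I_2 -> 'I_2.
Hypothesis hf : involutive f.

Lemma mapf_fin (a : falg K) : fin_supp (fun w => coef a (map f w)).
Proof. case: a => g [n hn]; exists n => w hw /=; apply: hn; rewrite size_map; exact: hw. Qed.
Definition phif (a : falg K) : falg K := FAlg _ (mapf_fin a).

Lemma phif_iso : alg_iso phif.
Proof.
split.
- exists phif => a; apply: falg_ext => w /=; by rewrite (mapK hf).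
- by move=> a b; apply: falg_ext.
- by move=> k a; apply: falg_ext.
- move=> a b; apply: falg_ext => w /=; rewrite /conv size_map.
  by apply: eq_bigr => i _; rewrite map_take map_drop.
- by apply: falg_ext => -[|x w].
Qed.

Lemma count_mapf (i : 'I_2) (s : word) : count_mem i (map f s) = count_mem (f i) s.
Proof.
rewrite count_map; apply: eq_count => z /=.
by rewrite -(inj_eq (inv_inj hf)) hf.
Qed.

Lemma bcoef_map (q p : 'M[K]_2) (hp : forall i j, p i j = q (f i) (f j)) u v :
  bcoef q (map f u) (map f v) = bcoef p u v.
Proof.
rewrite /bcoef (reindex_inj (inv_inj hf)) /=.
apply: eq_bigr => i _; rewrite (reindex_inj (inv_inj hf)) /=.
by apply: eq_bigr => j _; rewrite !count_mapf !hf hp.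
Qed.

Lemma phif_braid (q p : 'M[K]_2) (hp : forall i j, p i j = q (f i) (f j)) :
  braided_iso q p phif.
Proof.
split; first exact: phif_iso.
move=> u v x y; rewrite /tbraid /tpure /=.
case: (eqVneq (map f x) v) => ex; case: (eqVneq (map f y) u) => ey;
  rewrite -?ex -?ey ?(bcoef_map hp) //= ?mulr0 ?mul0r ?mulr0 //.
Qed.
End Map.

Section Fwd.
Variable K : fieldType.
Variable phi : falg K -> falg K.
Hypothesis hadd : forall a b, phi (fadd a b) = fadd (phi a) (phi b).
Hypothesis hscale : forall k a, phi (fscale k a) = fscale k (phi a).
Hypothesis hmul : forall a b, phi (fmul a b) = fmul (phi a) (phi b).
Hypothesis hone : phi (fone K) = fone K.

Definition M i j := coef (phi (fdelta K [:: i])) [:: j].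
Definition rowsp (r : 'I_2 -> K) :=
  exists a b, forall j, r j = a * M ord0 j + b * M ord_max j.

Lemma rowsp_M i : rowsp (M i).
Proof.
by case: (ord2P i) => ->; [exists 1, 0 | exists 0, 1] => j; rewrite !(mul1r, mul0r, addr0, add0r).
Qed.

Lemma rowsp_lin k1 k2 r s : rowsp r -> rowsp s -> rowsp (fun j => k1 * r j + k2 * s j).
Proof.
move=> [a [b hr]] [a' [b' hs]]; exists (k1 * a + k2 * a'), (k1 * b + k2 * b') => j.
rewrite hr hs; ring.
Qed.

Lemma rowsp_ext r s : rowsp r -> (forall j, s j = r j) -> rowsp s.
Proof. by move=> [a [b hr]] hs; exists a, b => j; rewrite hs hr. Qed.

Lemma coef_mul1 (a b : falg K) j :
  coef (fmul a b) [:: j] = coef a [::] * coef b [:: j] + coef a [:: j] * coef b [::].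
Proof. by rewrite /= /conv big_ord_recr big_ord_recr big_ord0 /= add0r. Qed.

Lemma rowsp_word w : rowsp (fun j => coef (phi (fdelta K w)) [:: j]).
Proof.
elim: w => [|i w IH].
  by exists 0, 0 => j; rewrite -/(fone K) hone /= !mul0r addr0.
have -> : fdelta K (i :: w) = fmul (fdelta K [:: i]) (fdelta K w) by rewrite -fdelta_cat.
rewrite hmul.
apply: (rowsp_ext (rowsp_lin (coef (phi (fdelta K [:: i])) [::])
                             (coef (phi (fdelta K w)) [::]) IH (rowsp_M i))) => j.
rewrite coef_mul1 /M; ring.
Qed.

Lemma rowsp_list (s : seq word) : forall a : falg K, (forall w, w \notin s -> coef a w = 0) ->
  rowsp (fun j => coef (phi a) [:: j]).
Proof.
elim: s => [|w s IH] a ha.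
  have E : phi a = fscale 0 (phi a).
    by rewrite -hscale; congr phi; apply: falg_ext => x /=; rewrite ha // mul0r.
  by exists 0, 0 => j; rewrite E /= !mul0r addr0.
set a' := fadd a (fscale (- coef a w) (fdelta K w)).
have ha' : forall x, x \notin s -> coef a' x = 0.
  move=> x hx /=; case: eqP => [->|/eqP nx]; first by rewrite mulr1 addrN.
  by rewrite mulr0 addr0 ha // in_cons negb_or nx hx.
apply: (rowsp_ext (rowsp_lin 1 (coef a w) (IH a' ha') (rowsp_word w))) => j.
rewrite /a' hadd hscale /=; ring.
Qed.

Fixpoint ws (n : nat) : seq word :=
  if n is m.+1 then [::] :: [seq i :: w | i <- enum 'I_2, w <- ws m] else [:: [::]].

Lemma ws_mem n w : (size w <= n)%N -> w \in ws n.
Proof.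
elim: n w => [|n IH] [|i w] //= h.
by rewrite in_cons; apply/orP; right; apply: allpairs_f; rewrite ?mem_enum ?IH.
Qed.

Lemma rowsp_all a : rowsp (fun j => coef (phi a) [:: j]).
Proof.
case: a => fa hfa; case: (hfa) => n hn.
apply: (rowsp_list (s := ws n)) => w hw /=; apply: hn.
rewrite leqNgt; apply/negP => hlt; move/negP: hw; apply; apply: ws_mem; exact: ltnW.
Qed.

Lemma fwd (hbij : bijective phi) :
  (M ord0 ord0 * M ord_max ord_max != 0) || (M ord0 ord_max * M ord_max ord0 != 0).
Proof.
case: hbij => g hg1 hg2.
have hk k : rowsp (fun j => (([:: j] == [:: k]) : nat)%:R).
  by apply: (rowsp_ext (rowsp_all (g (fdelta K [:: k])))) => j; rewrite hg2.
have [a0 [b0 h0]] := hk ord0; have [a1 [b1 h1]] := hk ord_max.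
have e00 := h0 ord0; have e01 := h0 ord_max; have e10 := h1 ord0; have e11 := h1 ord_max.
rewrite /= in e00 e01 e10 e11.
rewrite -negb_and; apply/negP => /andP [/eqP d1 /eqP d2].
have E : (a0 * b1 - b0 * a1) * (M ord0 ord0 * M ord_max ord_max - M ord0 ord_max * M ord_max ord0)
  = (a0 * M ord0 ord0 + b0 * M ord_max ord0) * (a1 * M ord0 ord_max + b1 * M ord_max ord_max)
  - (a0 * M ord0 ord_max + b0 * M ord_max ord_max) * (a1 * M ord0 ord0 + b1 * M ord_max ord0)
  by ring.
move: E; rewrite -e00 -e01 -e10 -e11 d1 d2 subrr mulr0.
by move/eqP; rewrite eq_sym /= mulr1 mulr0 subr0 oner_eq0.
Qed.
End Fwd.

Theorem proposition1 (K : fieldType) (q p : 'M[K]_2) :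
  (exists phi : falg K -> falg K, braided_iso q p phi) <->
  (p = q \/ p = bstar q).
Proof.
split.
- case=> phi [[hbij hadd hscale hmul hone] hbr].
  have hq : forall s : 'I_2 -> 'I_2, (forall i, M phi i (s i) != 0) ->
      forall i j, q i j = p (s i) (s j).
    move=> s hs i j; have := hbr [:: i] [:: j] [:: s j] [:: s i].
    rewrite /tbraid /tpure !bcoef1 => E.
    apply: (mulIf (mulf_neq0 (hs i) (hs j))).
    by move: E; rewrite /M [coef (phi (fdelta K [:: j])) _ * _]mulrC.
  case/orP: (fwd hadd hscale hmul hone hbij) => H; rewrite mulf_eq0 negb_or in H;
    case/andP: H => H1 H2.
  + left; apply/matrixP => i j; rewrite (hq id) //.
    by move=> k; case: (ord2P k) => ->.
  + right; apply/matrixP => i j; rewrite mxE (hq (@rev_ord 2)) ?rev_ordK //.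
    have r0 : rev_ord ord0 = ord_max :> 'I_2 by apply: val_inj.
    have r1 : rev_ord ord_max = ord0 :> 'I_2 by apply: val_inj.
    by move=> k; case: (ord2P k) => ->; rewrite ?r0 ?r1.
- case=> ->.
  + by exists (@phif K (fun i => i)); apply: phif_braid.
  + exists (@phif K (@rev_ord 2)); apply: phif_braid; first exact: rev_ordK.
    by move=> i j; rewrite mxE.
Qed.
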